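(* Let $n\ge1$ and let $f$ be an automorphism of the additive group $\mathbb{Z}^n$. Then the set of lengths of the cycles of $f$ is finite.
   Context: For a bijection $f$ of a set, a cycle is a finite sequence $a_1,\dots,a_m$ of distinct elements with $f(a_j)=a_{j+1}$ for $j<m$ and $f(a_m)=a_1$; its length is $m$. *)

(* Defs.v *)
From HB Require Import structures.
From mathcomp Require Import all_boot all_order all_algebra.
From mathcomp Require Import boolp classical_sets cardinality.
Set Implicit Arguments. Unset Strict Implicit. Unset Printing Implicit Defensive.
Import GRing.Theory.

(* A cycle of f : T -> T is a nonempty finite sequence [:: a_1; ...; a_m] of
   pairwise distinct elements with f a_j = a_{j+1} (j < m) and f a_m = a_1.
   [fcycle f s] is exactly the latter condition (path (frel f) a_1 (rcons ... a_1)). *)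
Definition is_cycle (T : eqType) (f : T -> T) (s : seq T) : bool :=
  [&& (0 < size s)%N, uniq s & fcycle f s].

Definition cycle_lengths (T : eqType) (f : T -> T) : set nat :=
  [set m | exists s : seq T, is_cycle f s /\ size s = m].

(* Main.v *)
Require Import Defs.
From HB Require Import structures.
From mathcomp Require Import all_boot all_order all_algebra.
From mathcomp Require Import boolp classical_sets cardinality.
Import GRing.Theory.
Local Open Scope ring_scope.
Set Implicit Arguments. Unset Strict Implicit.

Section Lin.
Variable n : nat.
Variable f : 'cV[int]_n -> 'cV[int]_n.
Hypothesis f_add : forall x y, f (x + y) = f x + f y.

Lemma f0 : f 0 = 0.
Proof. by apply: (addrI (f 0)); rewrite addr0 -f_add addr0. Qed.

Lemma fN x : f (- x) = - f x.
Proof. by apply/eqP; rewrite -(addr_eq0 (f (- x))) -f_add addNr f0. Qed.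

Lemma fMn x m : f (x *+ m) = f x *+ m.
Proof. elim: m => [|m IH]; first by rewrite !mulr0n f0. by rewrite !mulrS f_add IH. Qed.

Lemma fMz x k : f (x *~ k) = f x *~ k.
Proof. case: k => m; first by rewrite /= fMn. by rewrite /= fN fMn. Qed.

Lemma fsum I r (P : pred I) F : f (\sum_(i <- r | P i) F i) = \sum_(i <- r | P i) f (F i).
Proof. exact: (big_morph f f_add f0). Qed.

Lemma col_decomp (x : 'cV[int]_n) : x = \sum_(j < n) delta_mx j 0 *~ x j 0.
Proof.
rewrite {1}(matrix_sum_delta x); apply: eq_bigr => j _.
by rewrite big_ord1 -scaler_int intz.
Qed.

Definition toQ (x : 'cV[int]_n) : 'rV[rat]_n := (map_mx intr x)^T.
Definition Bmat : 'M[rat]_n := \matrix_(j, i) ((f (delta_mx j 0)) i 0)%:~R.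

Lemma toQ_f x : toQ (f x) = toQ x *m Bmat.
Proof.
apply/rowP => i; rewrite !mxE {1}(col_decomp x) fsum summxE rmorph_sum.
apply: eq_bigr => j _; rewrite !mxE fMz -scaler_int intz mxE rmorphM /= mulrC.
done.
Qed.

Lemma toQ_inj : injective toQ.
Proof. move=> x y /trmx_inj /matrixP H; apply/matrixP => i j; have := H i j; rewrite !mxE; exact: intr_inj. Qed.
End Lin.
From mathcomp Require Import zify.
Section Sq.
Variable n : nat.
Variable f : 'cV[int]_n.+1 -> 'cV[int]_n.+1.
Hypothesis f_add : forall x y, f (x + y) = f x + f y.
Local Notation B := (@Bmat n.+1 f).
Local Notation toQ := (@toQ n.+1).

Lemma toQ_iter k x : toQ (iter k f x) = toQ x *m B ^+ k.
Proof.
elim: k => [|k IH]; first by rewrite expr0 mulmx1.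
by rewrite iterS (@toQ_f n.+1 f f_add) IH exprSr -mulmxE mulmxA.
Qed.

Definition K d := kermx (B ^+ d - 1).

Lemma inK (u : 'rV[rat]_n.+1) d : (u <= K d)%MS = (u *m B ^+ d == u).
Proof.
apply/sub_kermxP/eqP; rewrite mulmxBr mulmx1; first by move/eqP; rewrite subr_eq0 => /eqP.
by move=> ->; rewrite subrr.
Qed.

Lemma powfix m (u : 'M[rat]_(m, n.+1)) (C : 'M_n.+1) q : u *m C = u -> u *m C ^+ q = u.
Proof.
move=> h; elim: q => [|q IH]; first by rewrite expr0 mulmx1.
by rewrite exprSr -mulmxE mulmxA IH h.
Qed.

Lemma Kdvd d e : (d %| e)%N -> (K d <= K e)%MS.
Proof.
move/dvdnP=> [q ->]; apply/sub_kermxP; rewrite mulmxBr mulmx1.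
apply/eqP; rewrite subr_eq0; apply/eqP.
rewrite mulnC exprM; apply: powfix.
by have /eqP := mulmx_ker (B ^+ d - 1); rewrite mulmxBr mulmx1 subr_eq0 => /eqP.
Qed.

Definition W j := K j`!.

Lemma fact_dvd m k : (m <= k)%N -> (m`! %| k`!)%N.
Proof.
elim: k => [|k IH]; first by rewrite leqn0 => /eqP ->.
rewrite leq_eqVlt => /orP [/eqP -> //|/IH h].
by rewrite factS dvdn_mull.
Qed.

Lemma exmax : exists j0, forall j, (\rank (W j) <= \rank (W j0))%N.
Proof.
suff H : forall b j, (n.+1 - \rank (W j) <= b)%N -> exists j0, forall j, (\rank (W j) <= \rank (W j0))%N.
  by apply: (H n.+1 0); rewrite leq_subr.
elim=> [|b IH] j hb.
  exists j => j'; have := rank_leq_col (W j'); move: hb; lia.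
have [h|h] := pselect (forall j', (\rank (W j') <= \rank (W j))%N); first by exists j.
move/existsNP: h => [j' /negP]; rewrite -ltnNge => hj'.
apply: (IH j'); have := rank_leq_col (W j'); move: hb hj'; lia.
Qed.

Lemma Wbound : exists M, (0 < M)%N /\ forall d, (0 < d)%N -> (K d <= K M)%MS.
Proof.
have [j0 hj0] := exmax; exists j0`!; split; first exact: fact_gt0.
move=> d hd; pose k := maxn d j0.
have h1 : (K d <= W k)%MS by apply: Kdvd; apply: dvdn_fact; rewrite hd leq_maxl.
have h2 : (W j0 <= W k)%MS by apply: Kdvd; apply: fact_dvd; rewrite leq_maxr.
apply: (submx_trans h1).
have := mxrank_leqif_sup h2; move=> [_ <-]; rewrite eqn_leq hj0 andbT.
exact: mxrankS.
Qed.
End Sq.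

Lemma cycle_iter (T : eqType) (g : T -> T) s : is_cycle g s ->
  exists a, iter (size s) g a = a /\ forall k, (0 < k < size s)%N -> iter k g a != a.
Proof.
case: s => [|a s'] //; rewrite /is_cycle => /and3P [_ /= /andP [ha _] hc].
move/fpathP: hc => [N hN].
have hsz : N = (size s').+1 by rewrite -(size_traject g (g a) N) -hN size_rcons.
have ht : traject g a N.+1 = a :: rcons s' a by rewrite trajectS hN.
have key : forall k, (k <= (size s').+1)%N -> iter k g a = nth a (a :: rcons s' a) k.
  by move=> k hk; rewrite -ht nth_traject // hsz ltnS.
exists a; split.
  by have := key _ (leqnn _); rewrite [nth _ _ _]/= nth_rcons ltnn eqxx.
case=> [|k] // /andP [_ hk]; have hk' : (k < size s')%N := hk.
have := key k.+1 (ltnW hk); rewrite [nth _ _ _]/= nth_rcons hk' => ->.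
by apply/eqP => he; move: ha; rewrite -he mem_nth.
Qed.

Unset Implicit Arguments.

Theorem proposition3p2 (n : nat) (hn : (1 <= n)%N)
  (f : 'cV[int]_n -> 'cV[int]_n)
  (f_add : forall x y, f (x + y) = f x + f y)
  (f_bij : bijective f) :
  finite_set (cycle_lengths f).
Proof.
rewrite /=.
case: n hn f f_add f_bij => // n _ f f_add _.
have [M [M0 hM]] := Wbound f.
apply: (@sub_finite_set _ _ `I_M.+1); last exact: finite_II.
move=> m [s [hs <-]] /=.
have [a [ha hk]] := cycle_iter hs.
have s0 : (0 < size s)%N by case/and3P: hs.
have hK : (toQ a <= K f (size s))%MS by rewrite inK -(toQ_iter f_add) ha.
have := submx_trans hK (hM _ s0); rewrite inK -(toQ_iter f_add) => /eqP /toQ_inj hMa.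
rewrite ltnS leqNgt; apply/negP => lt.
by have := hk M; rewrite M0 lt hMa eqxx => /(_ isT).
Qed.
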